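(* Let $\phi_0=0$. For each $a\in(-\tfrac12,\tfrac12)$ let $s_1(a)$ be the first positive zero of $f_a$. Then the image of $X_a:[-s_1(a),s_1(a)]\times\mathbb{S}^1\to\mathbb{S}^3$ is contained in the closed geodesic ball $B_{r(a)}(p_N)=\mathbb{S}^3\cap\{x^1\ge x_a(s_1(a))\}$, where $r(a)=\arccos x_a(s_1(a))$, and $r(a)<\tfrac\pi2$ if $a\in(-\tfrac12,0)$, $r(a)=\tfrac\pi2$ if $a=0$, $r(a)>\tfrac\pi2$ if $a\in(0,\tfrac12)$.
   Context: For $a\in(-\tfrac12,\tfrac12)$ and $\phi_0,t,s\in\mathbb{R}$ define $\psi(a,t)=\dfrac{(\frac14-a^2)^{1/2}}{(\frac12+a\cos 2t)^{1/2}(\frac12-a\cos 2t)}$, $\phi(a,s)=\phi_0+\int_0^s\psi(a,t)\,dt$, $x_a(s)=(\frac12-a\cos 2s)^{1/2}\cos\phi(a,s)$, $y_a(s)=(\frac12-a\cos 2s)^{1/2}\sin\phi(a,s)$, $z_a(s)=(\frac12+a\cos 2s)^{1/2}$, and $X_a:\mathbb{R}\times\mathbb{S}^1\to\mathbb{S}^3\subset\mathbb{R}^4$, $X_a(s,\theta)=(x_a(s),y_a(s),z_a(s)\cos\theta,z_a(s)\sin\theta)$. Define $f_a(s)=a\sin(2s)\sin\phi(a,s)+(\tfrac14-a^2)^{1/2}(\tfrac12+a\cos 2s)^{1/2}\cos\phi(a,s)$ (it has positive zeros). $p_N=(1,0,0,0)$ and $B_r(p_N)$ is the closed geodesic ball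 in $\mathbb{S}^3$ of radius $r$ centered at $p_N$, i.e. $\mathbb{S}^3\cap\{x^1\ge\cos r\}$. *)

(* Defs.v *)
From Stdlib Require Import Reals.
From Coquelicot Require Import Coquelicot.
Open Scope R_scope.

Definition psi (a t : R) : R :=
  sqrt (1/4 - a^2) / (sqrt (1/2 + a * cos (2*t)) * (1/2 - a * cos (2*t))).

Definition phi (phi0 a s : R) : R := phi0 + RInt (psi a) 0 s.

Definition xa (phi0 a s : R) : R := sqrt (1/2 - a * cos (2*s)) * cos (phi phi0 a s).
Definition ya (phi0 a s : R) : R := sqrt (1/2 - a * cos (2*s)) * sin (phi phi0 a s).
Definition za (a s : R) : R := sqrt (1/2 + a * cos (2*s)).

Definition Xa (phi0 a s theta : R) : R * R * R * R :=
  (xa phi0 a s, ya phi0 a s, za a s * cos theta, za a s * sin theta).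

Definition fa (phi0 a s : R) : R :=
  a * sin (2*s) * sin (phi phi0 a s)
  + sqrt (1/4 - a^2) * sqrt (1/2 + a * cos (2*s)) * cos (phi phi0 a s).

Definition first_pos_zero (f : R -> R) (s1 : R) : Prop :=
  0 < s1 /\ f s1 = 0 /\ forall s, 0 < s < s1 -> f s <> 0.

(* closed geodesic ball of radius r about p_N = (1,0,0,0) in S^3 *)
Definition in_ball_pN (r : R) (p : R * R * R * R) : Prop :=
  let '(x1, x2, x3, x4) := p in
  x1^2 + x2^2 + x3^2 + x4^2 = 1 /\ cos r <= x1.

(* Main.v *)
Require Import Defs.
From Stdlib Require Import Reals Lra Psatz.
From Coquelicot Require Import Coquelicot.
Open Scope R_scope.

Lemma W_pos a s : -(1/2)<a<1/2 -> 0 < 1/2 + a*cos(2*s).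
Proof. intros Ha. pose proof (COS_bound (2*s)).
  destruct (Rle_dec 0 a). assert (0 <= a*(cos(2*s)+1)) by (apply Rmult_le_pos; lra). lra.
  assert (0 <= (-a)*(1 - cos(2*s))) by (apply Rmult_le_pos; lra). lra. Qed.
Lemma U_pos a s : -(1/2)<a<1/2 -> 0 < 1/2 - a*cos(2*s).
Proof. intros Ha. pose proof (COS_bound (2*s)).
  destruct (Rle_dec 0 a). assert (0 <= a*(1-cos(2*s))) by (apply Rmult_le_pos; lra). lra.
  assert (0 <= (-a)*(1 + cos(2*s))) by (apply Rmult_le_pos; lra). lra. Qed.

Lemma psi_der a t : -(1/2)<a<1/2 -> ex_derive (psi a) t.
Proof.
  intros Ha. pose proof (W_pos a t Ha). pose proof (U_pos a t Ha).
  unfold psi. auto_derive. repeat split; try lra.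
  apply Rgt_not_eq. apply Rmult_gt_0_compat. apply sqrt_lt_R0. lra. lra.
Qed.

Lemma psi_cont a t : -(1/2)<a<1/2 -> continuous (psi a) t.
Proof. intros Ha. apply (@ex_derive_continuous R_AbsRing R_NormedModule), psi_der, Ha. Qed.

Lemma phi_deriv a s : -(1/2)<a<1/2 -> is_derive (phi 0 a) s (psi a s).
Proof.
  intros Ha.
  assert (H: is_derive (RInt (psi a) 0) s (psi a s)).
  { apply is_derive_RInt with (a := 0).
    - apply filter_forall. intros y. apply RInt_correct, ex_RInt_continuous.
      intros; apply psi_cont, Ha.
    - apply psi_cont, Ha. }
  unfold phi. replace (psi a s) with (0 + psi a s) by ring.
  apply (is_derive_plus (fun _ => 0) (RInt (psi a) 0)). apply (is_derive_const (K:=R_AbsRing) (V:=R_NormedModule)). exact H.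
Qed.

Lemma der_cont f x df : is_derive f x df -> continuity_pt f x.
Proof. intros H. apply continuity_pt_filterlim. apply (@ex_derive_continuous R_AbsRing R_NormedModule). exists df. exact H. Qed.

Lemma phi_0 a : phi 0 a 0 = 0.
Proof. unfold phi. rewrite RInt_point. apply Rplus_0_l. Qed.

Definition bb a := sqrt (1/4 - a^2).
Definition Nf a s := a*sin(2*s)*sqrt(1/2 + a*cos(2*s))*cos(phi 0 a s) - bb a * sin(phi 0 a s).
Definition Mf a s := Nf a s / ((1/2 + a*cos(2*s)) * sqrt(1/2 - a*cos(2*s))).

Lemma x_deriv a s : -(1/2)<a<1/2 ->
  is_derive (xa 0 a) s (sqrt(1/2 + a*cos(2*s)) * Mf a s).
Proof.
  intros Ha. pose proof (W_pos a s Ha). pose proof (U_pos a s Ha).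
  unfold xa. auto_derive.
  { repeat split; try lra. exists (psi a s). apply phi_deriv, Ha. }
  replace (Derive (fun x => phi 0 a x) s) with (psi a s) by (symmetry; apply is_derive_unique, phi_deriv, Ha). unfold psi, Mf, Nf, bb.
  replace (1/2 + - (a * cos (2 * s))) with (1/2 - a*cos(2*s)) by ring.
  remember (sqrt (1/2 - a*cos(2*s))) as u eqn:Eu.
  remember (sqrt (1/2 + a*cos(2*s))) as w eqn:Ew.
  assert (Hu: 1/2 - a*cos(2*s) = u*u) by (subst u; rewrite sqrt_sqrt; lra).
  assert (Hw: 1/2 + a*cos(2*s) = w*w) by (subst w; rewrite sqrt_sqrt; lra).
  assert (0 < u) by (subst u; apply sqrt_lt_R0; lra).
  assert (0 < w) by (subst w; apply sqrt_lt_R0; lra).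
  rewrite Hu, Hw. field. lra.
Qed.

Lemma M_deriv a s : -(1/2)<a<1/2 ->
  is_derive (Mf a) s (-2 * bb a * fa 0 a s / ((1/2 + a*cos(2*s))^2 * sqrt(1/2 - a*cos(2*s)))).
Proof.
  intros Ha. pose proof (W_pos a s Ha). pose proof (U_pos a s Ha).
  unfold Mf, Nf. auto_derive.
  { repeat split; try lra; try (exists (psi a s); apply phi_deriv, Ha).
    apply Rgt_not_eq. apply Rmult_gt_0_compat. lra. apply sqrt_lt_R0. lra. }
  replace (Derive (fun x => phi 0 a x) s) with (psi a s) by (symmetry; apply is_derive_unique, phi_deriv, Ha). unfold psi, fa, bb.
  replace (1/2 + - (a * cos (2 * s))) with (1/2 - a*cos(2*s)) by ring.
  pose proof (sin2_cos2 (2*s)) as Hsc. unfold Rsqr in Hsc.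
  assert (Hb: sqrt (1/4 - a^2) * sqrt (1/4 - a^2) = 1/4 - a^2) by (rewrite sqrt_sqrt; nra).
  remember (sqrt (1/4 - a^2)) as b eqn:Eb.
  remember (sqrt (1/2 - a*cos(2*s))) as u eqn:Eu.
  remember (sqrt (1/2 + a*cos(2*s))) as w eqn:Ew.
  assert (Hu: 1/2 - a*cos(2*s) = u*u) by (subst u; rewrite sqrt_sqrt; lra).
  assert (Hw: 1/2 + a*cos(2*s) = w*w) by (subst w; rewrite sqrt_sqrt; lra).
  assert (0 < u) by (subst u; apply sqrt_lt_R0; lra).
  assert (0 < w) by (subst w; apply sqrt_lt_R0; lra).
  rewrite Hu, Hw. field_simplify. 2,3: lra.
  replace (sin (2*s) ^ 2) with (1 - cos(2*s)^2) by nra.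
  replace (w^3) with (w*(1/2 + a*cos(2*s))) by (rewrite Hw; ring).
  replace (w^4) with ((1/2 + a*cos(2*s))^2) by (rewrite Hw; ring).
  replace (u^3) with (u*(1/2 - a*cos(2*s))) by (rewrite Hu; ring).
  replace (u^2) with ((1/2 - a*cos(2*s))) by (rewrite Hu; ring).
  replace (b^2) with (1/4 - a^2) by (rewrite <- Hb; ring).
  field. lra.
Qed.

Ltac dphi Ha := repeat match goal with |- context[Derive (fun x => phi 0 ?a x) ?y] =>
  replace (Derive (fun x => phi 0 a x) y) with (psi a y) by (symmetry; apply is_derive_unique, phi_deriv, Ha) end.

Lemma mvt f df a b : a <= b -> (forall x, a <= x <= b -> is_derive f x (df x)) ->
  exists c, a <= c <= b /\ f b - f a = df c * (b - a).
Proof.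
  intros Hab H.
  destruct (MVT_gen f a b df) as [c [Hc E]].
  - intros x Hx. rewrite Rmin_left, Rmax_right in Hx by lra. apply H; lra.
  - intros x Hx. rewrite Rmin_left, Rmax_right in Hx by lra. apply der_cont with (df x). apply H; lra.
  - exists c. rewrite Rmin_left, Rmax_right in Hc by lra. split; [exact Hc | exact E].
Qed.

Lemma psi_even a t : psi a (-t) = psi a t.
Proof. unfold psi. replace (2 * - t) with (-(2*t)) by ring. rewrite cos_neg. reflexivity. Qed.

Lemma bb_pos a : -(1/2)<a<1/2 -> 0 < bb a.
Proof. intros Ha. unfold bb. apply sqrt_lt_R0. nra. Qed.

Lemma psi_pos a t : -(1/2)<a<1/2 -> 0 < psi a t.
Proof.
  intros Ha. pose proof (W_pos a t Ha). pose proof (U_pos a t Ha). pose proof (bb_pos a Ha).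
  unfold psi. unfold bb in H1. apply Rdiv_lt_0_compat. lra.
  apply Rmult_lt_0_compat. apply sqrt_lt_R0; lra. lra.
Qed.

Lemma phi_odd a s : -(1/2)<a<1/2 -> phi 0 a (-s) = - phi 0 a s.
Proof.
  intros Ha.
  assert (HD: forall t, is_derive (fun t => phi 0 a (-t) + phi 0 a t) t 0).
  { intros t. auto_derive.
    - split. exists (psi a (-t)); apply phi_deriv, Ha. split; [exists (psi a t); apply phi_deriv, Ha | trivial].
    - dphi Ha. rewrite psi_even. ring. }
  destruct (Rle_dec 0 s).
  - destruct (mvt _ (fun _ => 0) 0 s r (fun x _ => HD x)) as [c [_ E]].
    rewrite Ropp_0, phi_0 in E. lra.
  - destruct (mvt _ (fun _ => 0) s 0 ltac:(lra) (fun x _ => HD x)) as [c [_ E]].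
    rewrite Ropp_0, phi_0 in E. lra.
Qed.

Lemma phi_cont a : -(1/2)<a<1/2 -> continuity (phi 0 a).
Proof. intros Ha x. apply der_cont with (psi a x). apply phi_deriv, Ha. Qed.

Lemma phi_mono a s t : -(1/2)<a<1/2 -> s <= t -> phi 0 a s <= phi 0 a t.
Proof.
  intros Ha Hst. destruct (mvt (phi 0 a) (psi a) s t Hst (fun x _ => phi_deriv a x Ha)) as [c [_ E]].
  pose proof (psi_pos a c Ha). nra.
Qed.

Lemma fa_cont a : -(1/2)<a<1/2 -> continuity (fa 0 a).
Proof.
  intros Ha x. pose proof (W_pos a x Ha).
  apply continuity_pt_filterlim. apply (@ex_derive_continuous R_AbsRing R_NormedModule).
  unfold fa. auto_derive. repeat split; try lra; exists (psi a x); apply phi_deriv, Ha.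
Qed.

Lemma fa_0 a : -(1/2)<a<1/2 -> 0 < fa 0 a 0.
Proof.
  intros Ha. unfold fa. rewrite phi_0. replace (2*0) with 0 by ring. rewrite sin_0, cos_0.
  pose proof (W_pos a 0 Ha). replace (2*0) with 0 in H by ring. rewrite cos_0 in H.
  pose proof (bb_pos a Ha). unfold bb in H0.
  assert (0 < sqrt (1/2 + a*1)) by (apply sqrt_lt_R0; lra). nra.
Qed.

Lemma f_pos a s1 : -(1/2)<a<1/2 -> first_pos_zero (fa 0 a) s1 ->
  forall s, 0 <= s < s1 -> 0 < fa 0 a s.
Proof.
  intros Ha [Hs1 [Hz Hnz]] s Hs.
  pose proof (fa_0 a Ha).
  destruct (Req_dec s 0) as [->|Hs0]; [exact H|].
  destruct (Rlt_le_dec 0 (fa 0 a s)) as [Hp|Hn]; [exact Hp|].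
  destruct (IVT_gen (fa 0 a) 0 s 0 (fa_cont a Ha)) as [t [Ht Et]].
  { rewrite Rmin_right, Rmax_left by lra. lra. }
  rewrite Rmin_left, Rmax_right in Ht by lra.
  destruct (Req_dec t 0) as [->|Ht0]; [lra|].
  exfalso. apply (Hnz t); [lra | exact Et].
Qed.

Lemma f_nonneg a s1 : -(1/2)<a<1/2 -> first_pos_zero (fa 0 a) s1 ->
  forall s, 0 <= s <= s1 -> 0 <= fa 0 a s.
Proof.
  intros Ha Hz s Hs. destruct (Req_dec s s1) as [->|].
  - destruct Hz as [_ [E _]]. lra.
  - apply Rlt_le, (f_pos a s1 Ha Hz). lra.
Qed.

Lemma Mf_0 a : Mf a 0 = 0.
Proof. unfold Mf, Nf. rewrite phi_0. replace (2*0) with 0 by ring. rewrite !sin_0. unfold Rdiv. ring. Qed.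

Lemma M_nonpos a s1 : -(1/2)<a<1/2 -> first_pos_zero (fa 0 a) s1 ->
  forall s, 0 <= s <= s1 -> Mf a s <= 0.
Proof.
  intros Ha Hz s Hs.
  destruct (mvt (Mf a) _ 0 s ltac:(lra) (fun x _ => M_deriv a x Ha)) as [c [Hc E]].
  rewrite Mf_0 in E.
  pose proof (f_nonneg a s1 Ha Hz c ltac:(lra)).
  pose proof (W_pos a c Ha). pose proof (U_pos a c Ha). pose proof (bb_pos a Ha).
  assert (0 < sqrt (1/2 - a*cos(2*c))) by (apply sqrt_lt_R0; lra).
  set (X := 2 * bb a * fa 0 a c * / ((1/2 + a*cos(2*c))^2 * sqrt(1/2 - a*cos(2*c)))).
  assert (0 <= X).
  { apply Rmult_le_pos. nra. apply Rlt_le, Rinv_0_lt_compat, Rmult_lt_0_compat; [apply pow_lt; lra | lra]. }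
  assert (Ee: -2 * bb a * fa 0 a c / ((1/2 + a*cos(2*c))^2 * sqrt(1/2 - a*cos(2*c))) = - X)
    by (unfold X, Rdiv; ring).
  rewrite Ee in E. nra.
Qed.

Lemma x_mono a s1 : -(1/2)<a<1/2 -> first_pos_zero (fa 0 a) s1 ->
  forall s, 0 <= s <= s1 -> xa 0 a s1 <= xa 0 a s.
Proof.
  intros Ha Hz s Hs.
  destruct (mvt (xa 0 a) _ s s1 ltac:(lra) (fun x _ => x_deriv a x Ha)) as [c [Hc E]].
  pose proof (M_nonpos a s1 Ha Hz c ltac:(lra)).
  assert (0 < sqrt (1/2 + a*cos(2*c))) by (apply sqrt_lt_R0; apply W_pos, Ha).
  assert (sqrt (1 / 2 + a * cos (2 * c)) * Mf a c <= 0) by nra.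
  nra.
Qed.

Lemma x_even a s : -(1/2)<a<1/2 -> xa 0 a (-s) = xa 0 a s.
Proof.
  intros Ha. unfold xa. rewrite phi_odd by exact Ha. rewrite cos_neg.
  replace (2 * - s) with (-(2*s)) by ring. rewrite cos_neg. reflexivity.
Qed.

Lemma theta_deriv a t : -(1/2)<a<1/2 -> cos t <> 0 ->
  is_derive (fun t => atan (bb a / (1/2 - a) * tan t)) t (bb a / (1/2 - a*cos(2*t))).
Proof.
  intros Ha Hc. pose proof (U_pos a t Ha). pose proof (bb_pos a Ha).
  assert (Hb: bb a * bb a = 1/4 - a^2) by (unfold bb; rewrite sqrt_sqrt; nra).
  pose proof (sin2_cos2 t) as Hsc. unfold Rsqr in Hsc.
  rewrite cos_2a in *.
  unfold tan. auto_derive. exact Hc.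
  set (b := bb a) in *. set (C := cos t) in *. set (S := sin t) in *.
  assert (0 < C*C) by (apply Rsqr_pos_lt in Hc; exact Hc).
  assert (HD: 1 + b / (1 / 2 - a) * (S * / C) * (b / (1 / 2 - a) * (S * / C) * 1)
     = (1/2 - a * (C*C - S*S)) / ((1/2 - a) * (C * C))).
  { field_simplify; [|lra|lra]. replace (b^2) with (1/4 - a^2) by (rewrite <- Hb; ring).
    replace (S^2) with (1 - C^2). field.
    split; apply Rgt_not_eq.
    replace (-2 * a * C ^ 2 + C ^ 2) with ((C*C)*(1-2*a)) by ring. apply Rmult_gt_0_compat; lra.
    replace (4 * a ^ 2 * C ^ 2 - 4 * a * C ^ 2 + C ^ 2) with ((C*C)*((1-2*a)*(1-2*a))) by ring.
    apply Rmult_gt_0_compat. lra. apply Rmult_gt_0_compat; lra.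
    rewrite <- Hsc. ring. }
  rewrite HD. replace (1 * C * / C + S * (- (1 * - S) * / (C * C))) with ((S*S + C*C)/(C*C)) by (field; lra).
  rewrite Hsc. field. repeat split; try lra.
Qed.

Lemma phi_big a : -(1/2)<a<1/2 -> exists s, 0 < s < PI/2 /\ PI/2 < phi 0 a s.
Proof.
  intros Ha.
  pose proof PI_RGT_0 as HPI.
  pose proof (bb_pos a Ha) as Hb.
  set (m := 1/2 + Rabs a).
  assert (Hm: 1/2 <= m < 1) by (unfold m; destruct (Rcase_abs a); [rewrite Rabs_left by lra | rewrite Rabs_right by lra]; lra).
  set (lam := 2/(1+m)).
  assert (Hlam: 1 < lam) by (unfold lam; apply Rlt_div_r; lra || (apply Rmult_lt_reg_r with (1+m); [lra|]); lra).
  set (k := bb a / (1/2 - a)).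
  assert (Hk: 0 < k) by (unfold k; apply Rdiv_lt_0_compat; lra).
  set (al := (PI/(2*lam) + PI/2)/2).
  assert (Hpl: 0 < PI/(2*lam) < PI/2).
  { split. apply Rdiv_lt_0_compat; lra.
    apply Rmult_lt_reg_r with (2*lam). lra. field_simplify; [|lra]. nra. }
  assert (Hal: 0 < al < PI/2) by (unfold al; lra).
  assert (Hlal: PI/2 < lam * al).
  { unfold al. replace (lam * ((PI / (2 * lam) + PI / 2) / 2)) with (PI/4 + lam * PI/4) by (field; lra). nra. }
  pose proof (tan_gt_0 al ltac:(lra) ltac:(lra)) as Htal.
  set (s := atan (tan al / k)).
  assert (Hs: 0 < s < PI/2).
  { split. unfold s. rewrite <- atan_0. apply atan_increasing. apply Rdiv_lt_0_compat; lra.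
    pose proof (atan_bound (tan al / k)). unfold s. lra. }
  exists s. split; [exact Hs|].
  set (D := fun t => phi 0 a t - lam * atan (k * tan t)).
  assert (HD: forall t, 0 <= t <= s -> is_derive D t (psi a t - lam * (bb a / (1/2 - a*cos(2*t))))).
  { intros t Ht. unfold D. apply (is_derive_minus (phi 0 a) (fun t => lam * atan (k * tan t))).
    apply phi_deriv, Ha. apply (is_derive_scal (fun t => atan (k * tan t))).
    apply theta_deriv. exact Ha. apply Rgt_not_eq, cos_gt_0; lra. }
  destruct (mvt D _ 0 s ltac:(lra) HD) as [c [Hc E]].
  assert (HD0: D 0 = 0) by (unfold D; rewrite phi_0, tan_0, Rmult_0_r, atan_0; ring).
  assert (Hder: 0 <= psi a c - lam * (bb a / (1/2 - a*cos(2*c)))).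
  { pose proof (W_pos a c Ha). pose proof (U_pos a c Ha).
    assert (Hw: 0 < sqrt (1/2 + a*cos(2*c))) by (apply sqrt_lt_R0; lra).
    assert (Hw2: sqrt (1/2 + a*cos(2*c)) * sqrt (1/2 + a*cos(2*c)) = 1/2 + a*cos(2*c)) by (apply sqrt_sqrt; lra).
    assert (HWm: 1/2 + a*cos(2*c) <= m).
    { pose proof (COS_bound (2*c)). unfold m. destruct (Rcase_abs a); [rewrite Rabs_left by lra | rewrite Rabs_right by lra]; nra. }
    assert (Hlw: lam * sqrt (1/2 + a*cos(2*c)) <= 1).
    { assert (lam*lam*m <= 1).
      { unfold lam. replace (2 / (1 + m) * (2 / (1 + m)) * m) with (4*m/((1+m)*(1+m))) by (field; lra).
        apply Rmult_le_reg_r with ((1+m)*(1+m)). nra. field_simplify; nra. }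
      nra. }
    unfold psi. fold (bb a).
    replace (psi a c) with (bb a / (sqrt (1/2 + a*cos(2*c)) * (1/2 - a*cos(2*c)))) by reflexivity.
    set (w := sqrt (1/2 + a*cos(2*c))) in *. set (U := 1/2 - a*cos(2*c)) in *.
    replace (bb a / (w * U) - lam * (bb a / U)) with ((bb a / (w*U)) * (1 - lam * w)) by (field; lra).
    apply Rmult_le_pos. apply Rlt_le, Rdiv_lt_0_compat. lra. nra. lra. }
  assert (Hphi: lam * atan (k * tan s) <= phi 0 a s).
  { rewrite HD0 in E. unfold D in E. nra. }
  unfold s in Hphi. rewrite tan_atan in Hphi.
  replace (k * (tan al / k)) with (tan al) in Hphi by (field; lra).
  rewrite atan_tan in Hphi by (split; lra). unfold s. lra.
Qed.

Lemma ident1 a s : bb a * fa 0 a s + a*sin(2*s) * Nf a s =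
  sqrt (1/2 + a*cos(2*s)) * cos (phi 0 a s) * (bb a * bb a + (a*sin(2*s))*(a*sin(2*s))).
Proof. unfold fa, Nf, bb. ring. Qed.
Lemma ident2 a s : a*sin(2*s) * fa 0 a s - bb a * Nf a s =
  sin (phi 0 a s) * (bb a * bb a + (a*sin(2*s))*(a*sin(2*s))).
Proof. unfold fa, Nf, bb. ring. Qed.

Lemma N_nonpos a s1 : -(1/2)<a<1/2 -> first_pos_zero (fa 0 a) s1 ->
  forall s, 0 <= s <= s1 -> Nf a s <= 0.
Proof.
  intros Ha Hz s Hs. pose proof (M_nonpos a s1 Ha Hz s Hs).
  pose proof (W_pos a s Ha). pose proof (U_pos a s Ha).
  assert (0 < sqrt (1/2 - a*cos(2*s))) by (apply sqrt_lt_R0; lra).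
  unfold Mf in H.
  set (Dn := (1 / 2 + a * cos (2 * s)) * sqrt (1 / 2 - a * cos (2 * s))) in *.
  assert (0 < Dn) by (unfold Dn; apply Rmult_lt_0_compat; lra).
  replace (Nf a s) with (Nf a s / Dn * Dn) by (field; lra). nra.
Qed.

Lemma phi_ivt a t0 v : -(1/2)<a<1/2 -> 0 <= t0 -> 0 <= v <= phi 0 a t0 ->
  exists t, 0 <= t <= t0 /\ phi 0 a t = v.
Proof.
  intros Ha Ht Hv.
  destruct (IVT_gen (phi 0 a) 0 t0 v (phi_cont a Ha)) as [t [Ht' E]].
  { rewrite phi_0. rewrite Rmin_left, Rmax_right by lra. lra. }
  rewrite Rmin_left, Rmax_right in Ht' by lra. exists t. split; assumption.
Qed.

Lemma bp_pos a s : -(1/2)<a<1/2 -> 0 < bb a * bb a + (a*sin(2*s))*(a*sin(2*s)).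
Proof. intros Ha. pose proof (bb_pos a Ha). nra. Qed.

Lemma s1_lt a s1 : -(1/2)<a<1/2 -> a <> 0 -> first_pos_zero (fa 0 a) s1 -> s1 < PI/2.
Proof.
  intros Ha Ha0 Hz. destruct (Rlt_le_dec s1 (PI/2)) as [|Hge]; [assumption|exfalso].
  pose proof PI_RGT_0 as HPI.
  assert (Hsin: forall t, 0 <= t <= PI/2 -> 0 <= sin (2*t)) by (intros; apply sin_ge_0; lra).
  assert (Hfn: forall t, 0 <= t <= PI/2 -> 0 <= fa 0 a t /\ Nf a t <= 0).
  { intros t Ht. split. apply (f_nonneg a s1 Ha Hz); lra. apply (N_nonpos a s1 Ha Hz); lra. }
  destruct (phi_big a Ha) as [s [Hs Hps]].
  destruct (Rlt_le_dec a 0) as [Hneg|Hpos].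
  -
    assert (Hc: forall t, 0 <= t <= PI/2 -> 0 <= cos (phi 0 a t)).
    { intros t Ht. destruct (Hfn t Ht) as [Hf HN]. pose proof (Hsin t Ht).
      pose proof (ident1 a t). pose proof (bp_pos a t Ha). pose proof (bb_pos a Ha).
      assert (0 < sqrt (1/2 + a*cos(2*t))) by (apply sqrt_lt_R0; apply W_pos, Ha).
      assert (0 <= a*sin(2*t)*Nf a t).
      { replace (a*sin(2*t)*Nf a t) with ((-a)*sin(2*t)*(- Nf a t)) by ring.
        apply Rmult_le_pos; [apply Rmult_le_pos|]; lra. }
      assert (0 <= bb a * fa 0 a t) by nra.
      assert (0 <= sqrt (1/2 + a*cos(2*t)) * cos (phi 0 a t)).
      { apply Rmult_le_reg_r with (bb a * bb a + a * sin (2 * t) * (a * sin (2 * t))). lra. nra. }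
      nra. }
    destruct (phi_ivt a s (Rmin (phi 0 a s) PI) Ha ltac:(lra)) as [t [Ht Et]].
    { split. apply Rmin_glb; lra. apply Rmin_l. }
    pose proof (Hc t ltac:(lra)). rewrite Et in H.
    assert (cos (Rmin (phi 0 a s) PI) < 0).
    { apply cos_lt_0. apply Rmin_glb_lt; lra. pose proof (Rmin_r (phi 0 a s) PI). lra. }
    lra.
  - assert (Hpos': 0 < a) by lra.
    assert (Hs': forall t, 0 <= t <= PI/2 -> 0 <= sin (phi 0 a t)).
    { intros t Ht. destruct (Hfn t Ht) as [Hf HN]. pose proof (Hsin t Ht).
      pose proof (ident2 a t). pose proof (bp_pos a t Ha). pose proof (bb_pos a Ha).
      assert (0 <= a*sin(2*t)*fa 0 a t).
      { apply Rmult_le_pos; [apply Rmult_le_pos|]; lra. }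
      assert (0 <= - (bb a * Nf a t)) by nra.
      apply Rmult_le_reg_r with (bb a * bb a + a * sin (2 * t) * (a * sin (2 * t))). lra. nra. }
    pose proof (phi_mono a s (PI/2) Ha ltac:(lra)) as Hm.
    assert (Hle: phi 0 a (PI/2) <= PI).
    { destruct (Rle_lt_dec (phi 0 a (PI/2)) PI) as [|Hgt]; [assumption|exfalso].
      destruct (phi_ivt a (PI/2) (Rmin (phi 0 a (PI/2)) (3*(PI/2))) Ha ltac:(lra)) as [t [Ht Et]].
      { split. apply Rmin_glb; lra. apply Rmin_l. }
      pose proof (Hs' t ltac:(lra)). rewrite Et in H.
      assert (sin (Rmin (phi 0 a (PI/2)) (3*(PI/2))) < 0).
      { apply sin_lt_0. apply Rmin_glb_lt; lra. pose proof (Rmin_r (phi 0 a (PI/2)) (3*(PI/2))). lra. }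
      lra. }
    assert (Hcos: cos (phi 0 a (PI/2)) < 0) by (apply cos_lt_0; lra).
    destruct (Hfn (PI/2) ltac:(lra)) as [Hf _].
    unfold fa in Hf. replace (2*(PI/2)) with PI in Hf by field. rewrite sin_PI in Hf.
    pose proof (bb_pos a Ha). unfold bb in H.
    assert (0 < sqrt (1/2 + a*cos PI)) by (replace PI with (2*(PI/2)) by field; apply sqrt_lt_R0, W_pos, Ha).
    assert (0 < sqrt (1 / 4 - a ^ 2) * sqrt (1 / 2 + a * cos PI)) by (apply Rmult_lt_0_compat; lra).
    nra.
Qed.

Lemma x_sign a s1 : -(1/2)<a<1/2 -> first_pos_zero (fa 0 a) s1 ->
  (a < 0 -> 0 < xa 0 a s1) /\ (a = 0 -> xa 0 a s1 = 0) /\ (0 < a -> xa 0 a s1 < 0).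
Proof.
  intros Ha Hz. pose proof Hz as [Hs1 [Hf _]].
  pose proof (W_pos a s1 Ha). pose proof (U_pos a s1 Ha).
  assert (Hw: 0 < sqrt (1/2 + a*cos(2*s1))) by (apply sqrt_lt_R0; lra).
  assert (Hu: 0 < sqrt (1/2 - a*cos(2*s1))) by (apply sqrt_lt_R0; lra).
  pose proof (bb_pos a Ha) as Hb.
  pose proof (ident1 a s1) as I1. pose proof (ident2 a s1) as I2. rewrite Hf in I1, I2.
  pose proof (bp_pos a s1 Ha) as Hbp.
  pose proof (sin2_cos2 (phi 0 a s1)) as Hsc. unfold Rsqr in Hsc.
  destruct (Req_dec a 0) as [Ha0|Ha0].
  - subst a. split; [lra|]. split; [|lra]. intros _.
    unfold xa. assert (cos (phi 0 0 s1) = 0).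
    { replace (0 * sin (2*s1)) with 0 in I1 by ring.
      assert (sqrt (1 / 2 + 0 * cos (2 * s1)) * cos (phi 0 0 s1) = 0).
      { apply Rmult_eq_reg_r with (bb 0 * bb 0 + 0 * 0). rewrite <- I1. ring. nra. }
      apply Rmult_integral in H1. destruct H1; [lra|assumption]. }
    rewrite H1. ring.
  - pose proof (s1_lt a s1 Ha Ha0 Hz) as Hlt.
    pose proof PI_RGT_0.
    assert (Hs2: 0 < sin (2*s1)) by (apply sin_gt_0; lra).
    pose proof (N_nonpos a s1 Ha Hz s1 ltac:(lra)) as HN.
    assert (HN': Nf a s1 < 0).
    { destruct (Rle_lt_or_eq_dec _ _ HN) as [|HN0]; [assumption|exfalso].
      rewrite HN0 in I1, I2.
      assert (sin (phi 0 a s1) = 0) by nra.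
      assert (sqrt (1 / 2 + a * cos (2 * s1)) * cos (phi 0 a s1) = 0) by nra.
      assert (cos (phi 0 a s1) = 0) by nra.
      nra. }
    unfold xa. split; [|split]; intros; [| lra |].
    + assert (0 < a*sin(2*s1)*Nf a s1).
      { replace (a*sin(2*s1)*Nf a s1) with ((-a)*sin(2*s1)*(- Nf a s1)) by ring.
        apply Rmult_lt_0_compat; [apply Rmult_lt_0_compat|]; lra. }
      assert (0 < sqrt (1 / 2 + a * cos (2 * s1)) * cos (phi 0 a s1)).
      { apply Rmult_lt_reg_r with (bb a * bb a + a * sin (2 * s1) * (a * sin (2 * s1))). lra. nra. }
      assert (0 < cos (phi 0 a s1)) by nra.
      apply Rmult_lt_0_compat; lra.
    + assert (a*sin(2*s1)*Nf a s1 < 0).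
      { replace (a*sin(2*s1)*Nf a s1) with (-((a*sin(2*s1))*(- Nf a s1))) by ring.
        apply Ropp_lt_gt_0_contravar. apply Rmult_lt_0_compat; [apply Rmult_lt_0_compat|]; lra. }
      assert (sqrt (1 / 2 + a * cos (2 * s1)) * cos (phi 0 a s1) < 0).
      { apply Rmult_lt_reg_r with (bb a * bb a + a * sin (2 * s1) * (a * sin (2 * s1))). lra. nra. }
      assert (cos (phi 0 a s1) < 0) by nra.
      nra.
Qed.

Lemma x_bound a s : -(1/2)<a<1/2 -> -1 <= xa 0 a s <= 1.
Proof.
  intros Ha. unfold xa. pose proof (U_pos a s Ha). pose proof (W_pos a s Ha).
  assert (Hu2: sqrt (1/2 - a*cos(2*s)) * sqrt (1/2 - a*cos(2*s)) = 1/2 - a*cos(2*s)) by (apply sqrt_sqrt; lra).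
  assert (0 < sqrt (1/2 - a*cos(2*s))) by (apply sqrt_lt_R0; lra).
  assert (sqrt (1/2 - a*cos(2*s)) <= 1) by nra.
  pose proof (COS_bound (phi 0 a s)). nra.
Qed.

Theorem mainTheorem7 :
  forall (a s1 : R), -(1/2) < a < 1/2 ->
  first_pos_zero (fa 0 a) s1 ->
  let r := acos (xa 0 a s1) in
  cos r = xa 0 a s1 /\
  (forall s theta, -s1 <= s <= s1 -> in_ball_pN r (Xa 0 a s theta)) /\
  (a < 0 -> r < PI/2) /\
  (a = 0 -> r = PI/2) /\
  (0 < a -> r > PI/2).
Proof.
  intros a s1 Ha Hz r.
  assert (Hcr: cos r = xa 0 a s1) by (unfold r; apply cos_acos, x_bound, Ha).
  pose proof (acos_bound (xa 0 a s1)) as Hrb. fold r in Hrb.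
  pose proof (x_sign a s1 Ha Hz) as [S1 [S2 S3]].
  pose proof PI_RGT_0.
  split; [exact Hcr|]. split; [|split; [|split]].
  - intros s theta Hs. unfold in_ball_pN, Xa. split.
    + unfold xa, ya, za.
      pose proof (U_pos a s Ha). pose proof (W_pos a s Ha).
      assert (Hu2: sqrt (1/2 - a*cos(2*s)) * sqrt (1/2 - a*cos(2*s)) = 1/2 - a*cos(2*s)) by (apply sqrt_sqrt; lra).
      assert (Hw2: sqrt (1/2 + a*cos(2*s)) * sqrt (1/2 + a*cos(2*s)) = 1/2 + a*cos(2*s)) by (apply sqrt_sqrt; lra).
      pose proof (sin2_cos2 (phi 0 a s)) as K1. pose proof (sin2_cos2 theta) as K2. unfold Rsqr in K1, K2.
      set (u := sqrt (1/2 - a*cos(2*s))) in *. set (w := sqrt (1/2 + a*cos(2*s))) in *.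
      set (cp := cos (phi 0 a s)) in *. set (sp := sin (phi 0 a s)) in *.
      replace ((u*cp)^2 + (u*sp)^2 + (w * cos theta)^2 + (w*sin theta)^2)
        with ((u*u)*(sp*sp + cp*cp) + (w*w)*(sin theta * sin theta + cos theta * cos theta)) by ring.
      rewrite K1, K2, Hu2, Hw2. lra.
    + rewrite Hcr. destruct (Rle_dec 0 s).
      * apply (x_mono a s1 Ha Hz). lra.
      * rewrite <- (x_even a s Ha). apply (x_mono a s1 Ha Hz). lra.
  - intros Ha0. specialize (S1 Ha0). destruct (Rlt_le_dec r (PI/2)) as [|Hge]; [assumption|].
    assert (cos r <= 0) by (apply cos_le_0; lra). lra.
  - intros Ha0. specialize (S2 Ha0). unfold r. rewrite S2. apply acos_0.
  - intros Ha0. specialize (S3 Ha0). destruct (Rlt_le_dec (PI/2) r) as [|Hge]; [assumption|].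
    assert (0 <= cos r) by (apply cos_ge_0; lra). lra.
Qed.
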